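(* Let $N\ge 1$ and, for $j=1,\ldots,n$, let $\mathsf{E}_j:\mathcal B(\mathbb R^{M_j})\to\mathcal L(\mathcal H^{\otimes N})$ be a Gaussian observable. Then the collection $\{\mathsf{E}_1,\ldots,\mathsf{E}_n\}$ is Gaussian compatible if and only if there exists a Gaussian observable $\mathsf{G}:\mathcal B(\mathbb R^M)\to\mathcal L(\mathcal H^{\otimes N})$, where $M=\sum_{j=1}^n M_j$ and $\mathbb R^M=\mathbb R^{M_1}\times\cdots\times\mathbb R^{M_n}$, which has the $\mathsf{E}_j$ as its margins, i.e. $\mathsf{E}_j(X)=\mathsf{G}(\mathbb R^{M_1}\times\cdots\times\mathbb R^{M_{j-1}}\times X\times\mathbb R^{M_{j+1}}\times\cdots\times\mathbb R^{M_n})$ for all $j$ and all Borel $X\subseteq\mathbb R^{M_j}$.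
   Context: $\mathcal H^{\otimes N}=L^2(\mathbb R^N)$ with canonical position and momentum operators $Q_j,P_j$, ${\bf R}=(Q_1,P_1,\ldots,Q_N,P_N)^T$, ${\bf \Omega}=\bigoplus_{j=1}^N\begin{pmatrix}0&1\\-1&0\end{pmatrix}$, and Weyl operators $W({\bf x})=e^{-i{\bf x}^T{\bf \Omega R}}$ for ${\bf x}\in\mathbb R^{2N}$. An observable is a POVM $\mathsf{E}:\mathcal B(\mathbb R^M)\to\mathcal L(\mathcal H^{\otimes N})$ ($\mathcal L$ = bounded operators). It is Gaussian if its Fourier transform is $\int e^{i{\bf p}^T{\bf x}}\,d\mathsf{E}({\bf x})=W({\bf Kp})e^{-\frac14{\bf p}^T{\bf Lp}-i{\bf m}^T{\bf p}}$ for all ${\bf p}\in\mathbb R^M$, where ${\bf K}$ is a real $2N\times M$ matrix, ${\bf L}$ a real $M\times M$ matrix with ${\bf L}-i{\bf K}^T{\bf \Omega K}\ge 0$, and ${\bf m}\in\mathbb R^M$; every such triple $({\bf K},{\bf L},{\bf m})$ determines a unique Gaussian observable. A Markov kernel $f:\mathcal B(\mathbb R^{M'})\times\mathbb R^M\to[0,1]$ is a map with $f(\cdot,{\bf x})$ a probability measure for each ${\bf x}$ and $f(X,\cdot)$ measurable for each $X$. It is a Gaussian postprocessing if there exist a real $M\times M'$ matrix ${\bf A}$, a real positive semidefinite $M'\times M'$ matrix ${\bf B}$ and ${\bf c}\in\mathbb R^{M'}$ such that $\int e^{i{\bf p}^T{\bf y}}f(d{\bf y},{\bf x})=e^{i({\bf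 Ap})^T{\bf x}}e^{-\frac14{\bf p}^T{\bf Bp}-i{\bf c}^T{\bf p}}$ for all ${\bf p}\in\mathbb R^{M'}$, ${\bf x}\in\mathbb R^M$; applying it to a Gaussian observable $\mathsf{G}$ with parameters $({\bf K},{\bf L},{\bf m})$ gives the observable $\mathsf{E}(X)=\int f(X,{\bf x})\,d\mathsf{G}({\bf x})$, which is Gaussian with parameters $({\bf KA},{\bf B}+{\bf A}^T{\bf LA},{\bf c}+{\bf A}^T{\bf m})$. A collection $\mathcal M$ of Gaussian observables (on the same Hilbert space) is Gaussian compatible if there is a Gaussian observable $\mathsf{G}$ such that every $\mathsf{E}\in\mathcal M$ is obtained from $\mathsf{G}$ via some Gaussian postprocessing. *)

(* Defs.v *)
From HB Require Import structures.
From mathcomp Require Import all_boot all_order all_algebra.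
From mathcomp Require Import reals.
From mathcomp Require Import complex.
Set Implicit Arguments. Unset Strict Implicit. Unset Printing Implicit Defensive.
Import Order.TTheory GRing.Theory Num.Theory.
Local Open Scope ring_scope.

(** Symplectic form Omega = (+)_{j=1}^N [[0,1],[-1,0]] on R^{2N}
    (indices 0..2N-1; rows/cols 2a, 2a+1 form the a-th block). *)
Definition Omega (R : ringType) (N : nat) : 'M[R]_(N.*2) :=
  \matrix_(i, k) (if ~~ odd i && (k == i.+1 :> nat) then 1
                  else if odd i && (i == k.+1 :> nat) then -1 else 0).

Definition cmx (R : rcfType) (m n : nat) (A : 'M[R]_(m, n)) : 'M[R[i]]_(m, n) :=
  map_mx (fun x : R => x%:C%C) A.

Definition psdC (R : rcfType) (n : nat) (H : 'M[R[i]]_n) : Prop :=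
  forall z : 'cV[R[i]]_n,
    0 <= \sum_(a < n) \sum_(b < n) ((z a 0)^* * H a b * z b 0).

Definition psdR (R : rcfType) (n : nat) (B : 'M[R]_n) : Prop :=
  B^T = B /\ forall u : 'cV[R]_n, 0 <= (u^T *m B *m u) 0 0.

(** Gaussian observable on H^{(x)N} with outcome space R^M, represented by its
    (unique) parameter triple (K, L, m) subject to L - i K^T Omega K >= 0.
    By the standing assumptions, Gaussian observables are in bijection with
    such triples (the Fourier transform W(Kp) e^{-p^T L p/4 - i m^T p}
    determines the POVM and vice versa). *)
Record gobs (R : rcfType) (N M : nat) := GObs {
  gK : 'M[R]_(N.*2, M);
  gL : 'M[R]_M;
  gm : 'cV[R]_M;
  gvalid : psdC (cmx gL - 'i%C *: cmx (gK^T *m Omega R N *m gK))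
}.

Definition gpost_of (R : rcfType) (N M M' : nat)
  (G : gobs R N M) (E : gobs R N M') : Prop :=
  exists (A : 'M[R]_(M, M')) (B : 'M[R]_M') (c : 'cV[R]_M'),
    psdR B /\
    gK E = gK G *m A /\
    gL E = B + A^T *m gL G *m A /\
    gm E = c + A^T *m gm G.

Definition gauss_compatible (R : rcfType) (N n : nat) (Ms : 'I_n -> nat)
  (E : forall j : 'I_n, gobs R N (Ms j)) : Prop :=
  exists (M : nat) (G : gobs R N M), forall j : 'I_n, gpost_of G (E j).

Definition offset (n : nat) (Ms : 'I_n -> nat) (j : 'I_n) : nat :=
  (\sum_(l < n | (l < j)%N) Ms l)%N.

(** Coordinate projection matrix pi_j : R^M -> R^{M_j}, written (as in the
    postprocessing convention x |-> A^T x) as the M x M_j matrix A = P_j. *)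
Definition blockP (R : ringType) (n : nat) (Ms : 'I_n -> nat) (j : 'I_n)
  : 'M[R]_(\sum_(l < n) Ms l, Ms j) :=
  \matrix_(a, k) (if (a == offset Ms j + k :> nat)%N then 1 else 0).

(** E is the j-th margin of G: E(X) = G(R^{M_1} x .. x X x .. x R^{M_n}),
    i.e. E is the image of G under the (deterministic, Gaussian) coordinate
    projection x |-> pi_j x; in parameters: (K P_j, P_j^T L P_j, P_j^T m). *)
Definition is_margin (R : rcfType) (N n : nat) (Ms : 'I_n -> nat)
  (G : gobs R N (\sum_(l < n) Ms l)) (j : 'I_n) (E : gobs R N (Ms j)) : Prop :=
  gK E = gK G *m blockP R Ms j /\
  gL E = (blockP R Ms j)^T *m gL G *m blockP R Ms j /\
  gm E = (blockP R Ms j)^T *m gm G.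

(* Main.v *)
Require Import Defs.
From mathcomp Require Import all_boot all_order all_algebra reals complex ring zify.
Set Implicit Arguments. Unset Strict Implicit. Unset Printing Implicit Defensive.
Import Order.TTheory GRing.Theory Num.Theory.
Local Open Scope ring_scope.

Section S.
Variable R : rcfType.
Definition qf n (H : 'M[R[i]]_n) (z : 'cV[R[i]]_n) : R[i] :=
  ((map_mx Num.conj z)^T *m H *m z) 0 0.

Lemma psdC_qf n (H : 'M[R[i]]_n) : psdC H <-> forall z, 0 <= qf H z.
Proof.
suff E : forall z, qf H z = \sum_(a < n) \sum_(b < n) ((z a 0)^* * H a b * z b 0).
  by split=> h z; [rewrite E | rewrite -E].
move=> z; rewrite /qf mxE exchange_big /=; apply: eq_bigr => b _.
rewrite mxE big_distrl /=; apply: eq_bigr => a _.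
by rewrite !mxE.
Qed.

Lemma conj_cmx m n (A : 'M[R]_(m,n)) : map_mx Num.conj (cmx A) = cmx A.
Proof. apply/matrixP=> a b; rewrite !mxE. exact: conjc_real. Qed.
Lemma cmxM m n p (A : 'M[R]_(m,n)) (B : 'M[R]_(n,p)) : cmx (A *m B) = cmx A *m cmx B.
Proof. exact: map_mxM. Qed.
Lemma cmxT m n (A : 'M[R]_(m,n)) : cmx A^T = (cmx A)^T.
Proof. by apply/matrixP => a b; rewrite !mxE. Qed.
Lemma cmxD m n (A B : 'M[R]_(m,n)) : cmx (A + B) = cmx A + cmx B.
Proof. exact: map_mxD. Qed.

Lemma psdC_cong m n (A : 'M[R]_(m,n)) H : psdC H -> psdC ((cmx A)^T *m H *m cmx A).
Proof.
move=> /psdC_qf h; apply/psdC_qf => z.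
have := h (cmx A *m z); rewrite /qf.
rewrite map_mxM conj_cmx trmx_mul !mulmxA //.
Qed.

Lemma psdC_add n (H1 H2 : 'M[R[i]]_n) : psdC H1 -> psdC H2 -> psdC (H1 + H2).
Proof.
move=> /psdC_qf h1 /psdC_qf h2; apply/psdC_qf => z.
rewrite /qf mulmxDr mulmxDl mxE; apply: addr_ge0; [exact: h1 | exact: h2].
Qed.

Lemma psdC_sum n I (r : seq I) (F : I -> 'M[R[i]]_n) :
  (forall j, psdC (F j)) -> psdC (\sum_(j <- r) F j).
Proof.
move=> h; elim/big_rec: _ => [|j H _ hH]; last exact: psdC_add.
by apply/psdC_qf => z; rewrite /qf mulmx0 mul0mx mxE.
Qed.

Lemma psdR_psdC n (B : 'M[R]_n) : psdR B -> psdC (cmx B).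
Proof.
case=> hsym hpos; apply/psdC_qf => z.
set x := map_mx (@complex.Re R) z; set y := map_mx (@complex.Im R) z.
have ez : z = cmx x + 'i%C *: cmx y.
  by apply/matrixP=> a b; rewrite !mxE [LHS]complexE mulrC.
have ecz : map_mx Num.conj z = cmx x - 'i%C *: cmx y.
  apply/matrixP=> a b; rewrite !mxE; case: (z a b) => p q /=.
  by simpc.
have exy : (x^T *m B *m y) 0 0 = (y^T *m B *m x) 0 0.
  have t : forall M : 'M[R]_1, M 0 0 = M^T 0 0 by move=> M; rewrite mxE.
  by rewrite [LHS]t !trmx_mul hsym trmxK mulmxA.
rewrite /qf ecz {1}ez.
clearbody x y.
rewrite (_ : (cmx x - 'i%C *: cmx y)^T = (cmx x)^T - 'i%C *: (cmx y)^T); last first.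
  by apply/matrixP=> a b; rewrite !mxE.
rewrite mulmxBl mulmxDr !mulmxBl -!scalemxAl -!scalemxAr.
rewrite -!cmxT -!cmxM.
have ce : forall M : 'M[R]_1, cmx M 0 0 = (M 0 0)%:C%C by move=> M; rewrite mxE.
set c1 := cmx (x^T *m B *m x); set c2 := cmx (y^T *m B *m x).
set c3 := cmx (x^T *m B *m y); set c4 := cmx (y^T *m B *m y).
rewrite !mxE.
move: exy (hpos x) (hpos y); rewrite !mxE => ->.
set s1 := \sum_j _ * x j 0; set s4 := \sum_j _ * y j 0; set s2 := \sum_j _ * x j 0.
move=> h1 h4.
have ii : 'i%C * 'i%C = -1 :> R[i] by rewrite -expr2 sqr_i.
rewrite mulrA ii (_ : _ + _ = (s1 + s4)%:C%C); last first.
  rewrite rmorphD /=; ring.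
by rewrite ler0c addr_ge0.
Qed.

Lemma cmx_sum m n I (r : seq I) (F : I -> 'M[R]_(m,n)) :
  cmx (\sum_(j <- r) F j) = \sum_(j <- r) cmx (F j).
Proof.
apply/matrixP=> a b; rewrite mxE !summxE rmorph_sum /=.
by apply: eq_bigr => j _; rewrite mxE.
Qed.
End S.

Section B.
Variables (R : rcfType) (n : nat) (Ms : 'I_n -> nat).
Local Notation S := (\sum_(l < n) Ms l)%N.
Local Notation P := (blockP R Ms).

Lemma sum_sub (p q : pred 'I_n) : (forall i, p i -> q i) ->
  (\sum_(i < n | p i) Ms i <= \sum_(i < n | q i) Ms i)%N.
Proof.
move=> h; rewrite [X in (X <= _)%N]big_mkcond [X in (_ <= X)%N]big_mkcond /=.
apply: leq_sum => i _; case: (boolP (p i)) => hp; first by rewrite h.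
by case: (q i).
Qed.

Lemma off_end (j : 'I_n) : (offset Ms j + Ms j <= S)%N.
Proof.
rewrite /offset.
have -> : (\sum_(l < n | (l < j)%N) Ms l + Ms j =
          \sum_(l < n | (l <= j)%N) Ms l)%N.
  rewrite [in RHS](bigD1 j) //= addnC; congr (_ + _)%N.
  by apply: eq_bigl => l; rewrite ltn_neqAle andbC.
exact: sum_sub.
Qed.

Lemma off_lt (l j : 'I_n) : (l < j)%N -> (offset Ms l + Ms l <= offset Ms j)%N.
Proof.
move=> hlj; rewrite /offset.
have -> : (\sum_(i < n | (i < l)%N) Ms i + Ms l =
          \sum_(i < n | (i <= l)%N) Ms i)%N.
  rewrite [in RHS](bigD1 l) //= addnC; congr (_ + _)%N.
  by apply: eq_bigl => i; rewrite ltn_neqAle andbC.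
apply: sum_sub => i hi; exact: leq_ltn_trans hi hlj.
Qed.

Lemma sum_ind m (u : nat) (c : R) : (u < m)%N ->
  \sum_(a < m) (if (a == u :> nat) then c else 0) = c.
Proof.
move=> hu; rewrite (bigD1 (Ordinal hu)) //= eqxx big1 ?addr0 //.
move=> a ha; case: eqP => // e; case/negP: ha; apply/eqP/val_inj; exact: e.
Qed.

Lemma PtP_entry (l j : 'I_n) k k' :
  ((P l)^T *m P j) k k' = if (offset Ms l + k == offset Ms j + k')%N then 1 else 0.
Proof.
rewrite mxE.
have hu : (offset Ms l + k < S)%N.
  by apply: leq_trans (off_end l); rewrite ltn_add2l.
rewrite -(sum_ind (if (offset Ms l + k == offset Ms j + k')%N then 1 else 0) hu).
apply: eq_bigr => a _; rewrite !mxE.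
case: eqP => [->|]; last by rewrite mul0r.
by rewrite mul1r.
Qed.

Lemma PtP_same (j : 'I_n) : (P j)^T *m P j = 1%:M.
Proof.
apply/matrixP=> k k'; rewrite PtP_entry !mxE eqn_add2l.
case: eqP => [/val_inj->|ne]; first by rewrite eqxx.
case: eqP => // e; case: ne; by rewrite e.
Qed.

Lemma PtP_diff (l j : 'I_n) : l != j -> (P l)^T *m P j = 0.
Proof.
move=> hlj; apply/matrixP=> k k'; rewrite PtP_entry !mxE.
case: eqP => // e; exfalso.
have hk := ltn_ord k; have hk' := ltn_ord k'.
case: (ltngtP l j) => [h|h|h].
- have := off_lt h; lia.
- have := off_lt h; lia.
- by case/eqP: hlj; apply: val_inj.
Qed.
End B.
From Stdlib Require Import ClassicalEpsilon.

Theorem proposition1 (R : realType) (N n : nat) (hN : (0 < N)%N)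
  (Ms : 'I_n -> nat) (E : forall j : 'I_n, gobs R N (Ms j)) :
  gauss_compatible E <->
  exists G : gobs R N (\sum_(l < n) Ms l),
    forall j : 'I_n, is_margin G (E j).
Proof.
split; last first.
  case=> G hG; exists (\sum_(l < n) Ms l), G => j.
  case: (hG j) => hK [hL hm].
  exists (blockP R Ms j), 0, 0; split; last by rewrite hK hL hm !add0r.
  split; first by rewrite trmx0.
  by move=> u; rewrite mulmx0 mul0mx mxE.
case=> M [G hG].
pose P := blockP R Ms.
have hc : forall j, {A : 'M[R]_(M, Ms j) & {B : 'M[R]_(Ms j) & {c : 'cV[R]_(Ms j) |
    psdR B /\ gK (E j) = gK G *m A /\ gL (E j) = B + A^T *m gL G *m A /\
    gm (E j) = c + A^T *m gm G}}}.
  move=> j; have [A hA] := constructive_indefinite_description _ (hG j).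
  have [B hB] := constructive_indefinite_description _ hA.
  have [c hc] := constructive_indefinite_description _ hB.
  by exists A, B, c.
pose AA j := projT1 (hc j).
pose BB j := projT1 (projT2 (hc j)).
pose cc j := proj1_sig (projT2 (projT2 (hc j))).
have hABc j : psdR (BB j) /\ gK (E j) = gK G *m AA j /\
    gL (E j) = BB j + (AA j)^T *m gL G *m AA j /\ gm (E j) = cc j + (AA j)^T *m gm G.
  exact: (proj2_sig (projT2 (projT2 (hc j)))).
pose A' := \sum_j AA j *m (P j)^T.
pose D := \sum_j P j *m BB j *m (P j)^T.
pose m' := \sum_j P j *m cc j + A'^T *m gm G.
pose K' := gK G *m A'.
pose L' := D + A'^T *m gL G *m A'.
have hv : psdC (cmx L' - 'i%C *: cmx (K'^T *m Omega R N *m K')).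
  have -> : cmx L' - 'i%C *: cmx (K'^T *m Omega R N *m K') =
     cmx D + (cmx A')^T *m (cmx (gL G) - 'i%C *: cmx ((gK G)^T *m Omega R N *m gK G)) *m cmx A'.
    rewrite /L' /K' cmxD -addrA; congr (_ + _).
    rewrite mulmxBr mulmxBl -scalemxAr -scalemxAl trmx_mul !cmxM !cmxT !mulmxA.
    by [].
  apply: psdC_add; last exact: psdC_cong (gvalid G).
  rewrite /D cmx_sum; apply: psdC_sum => j.
  rewrite !cmxM -[cmx (P j)]trmxK -cmxT.
  exact: psdC_cong (psdR_psdC (proj1 (hABc j))).
have hAP j : A' *m P j = AA j.
  rewrite /A' mulmx_suml (bigD1 j) //= -mulmxA PtP_same mulmx1 big1 ?addr0 //.
  by move=> l hl; rewrite -mulmxA PtP_diff // mulmx0.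
have hDP j : (P j)^T *m D *m P j = BB j.
  rewrite /D mulmx_sumr mulmx_suml (bigD1 j) //= !mulmxA PtP_same mul1mx.
  rewrite -mulmxA PtP_same mulmx1 big1 ?addr0 //.
  by move=> l hl; rewrite !mulmxA (@PtP_diff _ _ _ j l) ?mul0mx // eq_sym.
have hmP j : (P j)^T *m m' = cc j + (AA j)^T *m gm G.
  rewrite /m' mulmxDr mulmx_sumr (bigD1 j) //= mulmxA PtP_same mul1mx big1 ?addr0; last first.
    by move=> l hl; rewrite mulmxA (@PtP_diff _ _ _ j l) ?mul0mx // eq_sym.
  by rewrite mulmxA -trmx_mul hAP.
exists (@GObs R N _ K' L' m' hv) => j /=.
case: (hABc j) => _ [hK [hL hm]].
split; first by rewrite hK /K' -mulmxA hAP.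
split; last by rewrite hm hmP.
rewrite hL /L' mulmxDr mulmxDl hDP; congr (_ + _).
transitivity ((A' *m P j)^T *m gL G *m (A' *m P j)); first by rewrite hAP.
by rewrite trmx_mul !mulmxA.
Qed.
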